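(* Let $\mathcal C$ be a finite set of cycles and $m\ge1$. The following are equivalent: (i) $\big|\bigcup_{c\in\mathcal C}\Omega_m(c)\big|=\sum_{c\in\mathcal C}\mathrm{per}(c)$; (ii) the map $v\mapsto\mathrm{lbit}_m(v)$ is injective on $\bigcup_{c\in\mathcal C}\Omega_{m+1}(c)$; (iii) the map $v\mapsto\mathrm{hbit}_m(v)$ is injective on $\bigcup_{c\in\mathcal C}\Omega_{m+1}(c)$.
   Context: A periodic binary sequence $s:\mathbb Z\to\{0,1\}$ of least period $p$ determines the cycle $c=[s(0),\dots,s(p-1)]$ (all shifts of $s$ give the same cycle), with $\mathrm{per}(c)=p$. For such $c$, $\Omega_k(c)=\{(s(i),s((i+1)\bmod p),\dots,s((i+k-1)\bmod p)):0\le i<p\}\subseteq\{0,1\}^k$. For $v=(a_1,\dots,a_{m+1})\in\{0,1\}^{m+1}$, $\mathrm{hbit}_m(v)=(a_1,\dots,a_m)$ and $\mathrm{lbit}_m(v)=(a_2,\dots,a_{m+1})$. *)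

(* Defs.v *)
From mathcomp Require Import all_boot.
Set Implicit Arguments. Unset Strict Implicit. Unset Printing Implicit Defensive.

(* A binary word w = [s(0); ...; s(p-1)] represents the cycle of the
   p-periodic sequence s(i) = w[i mod p].  It represents a cycle of least
   period p = size w iff w is nonempty and no proper rotation fixes it. *)
Definition primitive (w : seq bool) : bool :=
  (0 < size w) && all (fun d => rot d w != w) (iota 1 (size w).-1).

Definition per (w : seq bool) : nat := size w.

Definition same_cycle (w w' : seq bool) : bool :=
  has (fun d => rot d w == w') (iota 0 (size w)).

Definition window (w : seq bool) (k i : nat) : seq bool :=
  [seq nth false w ((i + j) %% size w) | j <- iota 0 k].

Definition Omega (k : nat) (w : seq bool) : seq (seq bool) :=
  [seq window w k i | i <- iota 0 (size w)].

(* A finite set of cycles: a list of representatives, each of least period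
   its length, pairwise representing different cycles. *)
Definition cycle_set (C : seq (seq bool)) : Prop :=
  (forall w, w \in C -> primitive w) /\
  (forall i j, i < j < size C ->
     ~~ same_cycle (nth [::] C i) (nth [::] C j)).

Definition OmegaU (k : nat) (C : seq (seq bool)) : seq (seq bool) :=
  undup (flatten [seq Omega k w | w <- C]).

Definition hbit (m : nat) (v : seq bool) : seq bool := take m v.
Definition lbit (m : nat) (v : seq bool) : seq bool := drop 1 v.

Definition inj_on (f : seq bool -> seq bool) (A : seq (seq bool)) : Prop :=
  forall u v, u \in A -> v \in A -> f u = f v -> u = v.

(* Main.v *)
Require Import Defs.
From mathcomp Require Import all_boot zify.

Definition sq (w : seq bool) n := nth false w (n %% size w).

Lemma size_window w k i : size (window w k i) = k.
Proof. by rewrite /window size_map size_iota. Qed.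

Lemma nth_window w k i j : j < k -> nth false (window w k i) j = sq w (i + j).
Proof. by move=> h; rewrite /window (nth_map 0) ?size_iota // nth_iota. Qed.

Lemma window_eq w w' k i i' : (forall j, j < k -> sq w (i + j) = sq w' (i' + j)) ->
  window w k i = window w' k i'.
Proof.
move=> h; apply: (eq_from_nth (x0 := false)); rewrite !size_window // => j jk.
by rewrite !nth_window // h.
Qed.

Lemma window_mod w k i : window w k (i %% size w) = window w k i.
Proof. by apply: window_eq => j _; rewrite /sq modnDml. Qed.

Lemma sq_addmul w y t : sq w (y + t * size w) = sq w y.
Proof. by rewrite /sq addnC modnMDl. Qed.

Lemma window_addmul w k i t : window w k (i + t * size w) = window w k i.
Proof. by apply: window_eq => j _; rewrite addnAC sq_addmul. Qed.

Lemma drop_window w k i : drop 1 (window w k.+1 i) = window w k i.+1.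
Proof.
apply: (eq_from_nth (x0 := false)); rewrite ?size_drop !size_window ?subn1 // => j jk.
by rewrite nth_drop !nth_window // ?add1n -?addSnnS.
Qed.

Lemma take_window w k i : take k (window w k.+1 i) = window w k i.
Proof.
apply: (eq_from_nth (x0 := false)); rewrite ?size_takel ?size_window // => j jk.
by rewrite nth_take // !nth_window // ltnS ltnW.
Qed.

Lemma head_window w k i : 0 < k -> nth false (window w k i) 0 = sq w i.
Proof. by move=> h; rewrite nth_window // addn0. Qed.

Lemma OmegaU_in k C w n : w \in C -> 0 < size w -> window w k n \in OmegaU k C.
Proof.
move=> wC sw; rewrite mem_undup; apply/flattenP; exists (Omega k w).
  by apply/map_f.
by rewrite -window_mod; apply/map_f; rewrite mem_iota ltn_mod sw.
Qed.

Lemma OmegaU_inv k C v : v \in OmegaU k C ->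
  exists w i, [/\ w \in C, i < size w & v = window w k i].
Proof.
rewrite mem_undup => /flattenP [s /mapP [w wC ->] /mapP [i]].
by rewrite mem_iota => /andP[_ h] ->; exists w, i.
Qed.

Lemma nth_rot' (x : bool) r w y : r <= size w -> y < size w ->
  nth x (rot r w) y = nth x w ((r + y) %% size w).
Proof.
move=> hr hy; rewrite /rot nth_cat size_drop.
case: ltnP => h.
  by rewrite nth_drop modn_small //; lia.
rewrite nth_take; last by lia.
have -> : r + y = (y - (size w - r)) + size w by lia.
by rewrite modnDr modn_small //; lia.
Qed.

Lemma prim_period w d : primitive w -> (forall y, sq w (y + d) = sq w y) -> size w %| d.
Proof.
move=> /andP [sw /allP pr] h.
have rp : d %% size w < size w by rewrite ltn_mod.
rewrite /dvdn; apply/negPn/negP => r0.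
have : rot (d %% size w) w != w.
  apply: pr; rewrite mem_iota; apply/andP; split; first by rewrite lt0n.
  by rewrite add1n prednK.
case/negP; apply/eqP; apply: (eq_from_nth (x0 := false)); rewrite ?size_rot // => y yp.
rewrite nth_rot' ?(ltnW rp) // modnDml addnC.
have := h y; rewrite /sq -modnDmr => ->.
by rewrite modn_small.
Qed.

Lemma shift_rot u v e : size u = size v -> 0 < size u ->
  (forall y, sq u (y + e) = sq v y) -> same_cycle u v.
Proof.
move=> suv su h; apply/hasP; exists (e %% size u).
  by rewrite mem_iota ltn_mod su.
apply/eqP; apply: (eq_from_nth (x0 := false)); rewrite ?size_rot // => y yp.
rewrite nth_rot' //; last by rewrite ltnW // ltn_mod.
rewrite modnDml addnC; have := h y; rewrite /sq => ->.
by rewrite -suv modn_small.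
Qed.

Lemma cs_prim C w : cycle_set C -> w \in C -> 0 < size w.
Proof. by case=> h _ /h /andP []. Qed.

Lemma key C c c' a b : cycle_set C -> c \in C -> c' \in C -> a < size c -> b < size c' ->
  (forall x, sq c (a + x) = sq c' (b + x)) -> c = c' /\ a = b.
Proof.
move=> CS cC c'C ha hb h.
have sc := cs_prim _ _ CS cC; have sc' := cs_prim _ _ CS c'C.
have prc : primitive c by case: CS => P _; apply: P.
have prc' : primitive c' by case: CS => P _; apply: P.
set e := b + (size c - a).
have H1 : forall y, sq c y = sq c' (y + e).
  move=> y; rewrite -(sq_addmul c y 1) mul1n.
  have -> : y + size c = a + (y + size c - a) by lia.
  by rewrite h; congr sq; lia.
set e2 := e * (size c').-1.
have H2 : forall z, sq c' z = sq c (z + e2).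
  move=> z; rewrite -(sq_addmul c' z e) H1.
  have -> : z + e * size c' = z + e2 + e.
    rewrite /e2 -{1}(prednK sc') mulnS; lia.
  by [].
have d1 : size c %| size c'.
  apply: prim_period => // y.
  have := sq_addmul c' (y + e) 1; rewrite mul1n => E.
  by rewrite !H1 addnAC E.
have d2 : size c' %| size c.
  apply: prim_period => // y.
  have := sq_addmul c (y + e2) 1; rewrite mul1n => E.
  by rewrite !H2 addnAC E.
have eqs : size c = size c' by apply/eqP; rewrite eqn_dvd d1 d2.
have s1 : same_cycle c c' by apply: shift_rot => // y; rewrite H2.
have s2 : same_cycle c' c by apply: shift_rot => //; rewrite -?eqs // => y; rewrite H1.
have ecc : c = c'.
  case: CS => _ ND.
  have i1 := cC; rewrite -index_mem in i1.
  have i2 := c'C; rewrite -index_mem in i2.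
  case: (ltngtP (index c C) (index c' C)) => hi.
  - by have := ND (index c C) (index c' C); rewrite hi i2 !nth_index // s1 => /(_ isT).
  - by have := ND (index c' C) (index c C); rewrite hi i1 !nth_index // s2 => /(_ isT).
  - by rewrite -(nth_index [::] cC) hi nth_index.
split => //; subst c'.
have d3 : size c %| e by apply: prim_period => // y; rewrite -H1.
move: d3; rewrite /dvdn /e.
case: (ltnP (b + (size c - a)) (size c)) => hlt.
  by rewrite modn_small // => /eqP; lia.
have -> : b + (size c - a) = (b + (size c - a) - size c) + size c by lia.
by rewrite modnDr modn_small => [/eqP|]; lia.
Qed.

Definition posl (C : seq (seq bool)) : seq (seq bool * nat) :=
  flatten [seq [seq (w, i) | i <- iota 0 (size w)] | w <- C].

Lemma flat_eq m C : flatten [seq Omega m w | w <- C] =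
  map (fun q : seq bool * nat => window q.1 m q.2) (posl C).
Proof. by elim: C => //= w C IH; rewrite map_cat IH /Omega -map_comp. Qed.

Lemma posl_mem C q : q \in posl C -> q.1 \in C /\ q.2 < size q.1.
Proof.
move=> /flattenP [s /mapP [w wC ->] /mapP [i]].
by rewrite mem_iota => /andP[_ h] ->.
Qed.

Lemma posl_in C w i : w \in C -> i < size w -> (w, i) \in posl C.
Proof.
move=> wC h; apply/flattenP; exists [seq (w, i) | i <- iota 0 (size w)].
  by apply: map_f.
by apply: map_f; rewrite mem_iota.
Qed.

Lemma posl_uniq C : uniq C -> uniq (posl C).
Proof.
elim: C => // w C IH /= /andP [wn u].
rewrite /posl /= -/(posl C) cat_uniq IH // andbT map_inj_uniq ?iota_uniq; last by move=> x y [].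
apply/hasPn => q /posl_mem [qC _]; apply/mapP => [[i _ qe]]; rewrite qe /= in qC.
by rewrite qC in wn.
Qed.

Lemma size_flat m C : size (flatten [seq Omega m w | w <- C]) = \sum_(w <- C) per w.
Proof.
elim: C => [|w C IH]; rewrite ?big_nil ?big_cons //=.
by rewrite size_cat IH /Omega size_map size_iota.
Qed.

Lemma uniq_map_inj (T U : eqType) (f : T -> U) s : uniq (map f s) -> {in s &, injective f}.
Proof.
elim: s => // x s IH /= /andP [nx u] y z; rewrite !inE.
move=> /orP[/eqP->|ys] /orP[/eqP->|zs] // e.
- by move: nx; rewrite e map_f.
- by move: nx; rewrite -e map_f.
- exact: IH.
Qed.

Lemma cs_uniq C : cycle_set C -> uniq C.
Proof.
move=> [P ND]; apply/(uniqP [::]) => i j hi0 hj0 e.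
have hi : i < size C := hi0. have hj : j < size C := hj0.
case: (ltngtP i j) => // h.
- have := ND i j; rewrite h hj /= => /(_ isT); rewrite e.
  case/negP; apply/hasP; exists 0; last by rewrite rot0.
  by rewrite mem_iota add0n -e; apply: (cs_prim _ _ (conj P ND)); apply: mem_nth.
- have := ND j i; rewrite h hi /= => /(_ isT); rewrite e.
  case/negP; apply/hasP; exists 0; last by rewrite rot0.
  by rewrite mem_iota add0n; apply: (cs_prim _ _ (conj P ND)); apply: mem_nth.
Qed.

Theorem lemma5 (C : seq (seq bool)) (m : nat) :
  cycle_set C -> 1 <= m ->
  (size (OmegaU m C) = \sum_(w <- C) per w <-> inj_on (lbit m) (OmegaU m.+1 C)) /\
  (inj_on (lbit m) (OmegaU m.+1 C) <-> inj_on (hbit m) (OmegaU m.+1 C)).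
Proof.
move=> CS m1.
pose I := forall c c' a b, c \in C -> c' \in C -> a < size c -> b < size c' ->
  window c m a = window c' m b -> c = c' /\ a = b.
have iI : size (OmegaU m C) = \sum_(w <- C) per w <-> I.
  rewrite /OmegaU -(size_flat m C) flat_eq; split.
  - move=> hs c c' a b cC c'C ha hb e.
    have u : uniq (map (fun q : seq bool * nat => window q.1 m q.2) (posl C)).
      apply/negPn/negP => nu; move: hs; rewrite -ltn_size_undup in nu.
      by move=> hs; rewrite hs ltnn in nu.
    have := uniq_map_inj _ _ _ _ u _ _ (posl_in _ _ _ cC ha) (posl_in _ _ _ c'C hb) e.
    by case.
  - move=> hI; rewrite undup_id // map_inj_in_uniq; last first.
      move=> [c a] [c' b] /posl_mem [/= cC ha] /posl_mem [/= c'C hb] /= e.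
      by case: (hI _ _ _ _ cC c'C ha hb e) => -> ->.
    exact: posl_uniq _ (cs_uniq _ CS).
have Iii : I -> inj_on (lbit m) (OmegaU m.+1 C).
  move=> hI u v /OmegaU_inv [c [i [cC hi ->]]] /OmegaU_inv [c' [j [c'C hj ->]]].
  rewrite /lbit !drop_window -(window_mod c m i.+1) -(window_mod c' m j.+1) => e.
  have sc := cs_prim _ _ CS cC; have sc' := cs_prim _ _ CS c'C.
  have m1' : i.+1 %% size c < size c by rewrite ltn_mod.
  have m2' : j.+1 %% size c' < size c' by rewrite ltn_mod.
  have [ecc eij] := hI _ _ _ _ cC c'C m1' m2' e.
  subst c'; congr window.
  move/eqP: eij; rewrite -(addn1 i) -(addn1 j) eqn_modDr !modn_small //; exact/eqP.
have Iiii : I -> inj_on (hbit m) (OmegaU m.+1 C).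
  move=> hI u v /OmegaU_inv [c [i [cC hi ->]]] /OmegaU_inv [c' [j [c'C hj ->]]].
  rewrite /hbit !take_window => e.
  by have [-> ->] := hI _ _ _ _ cC c'C hi hj e.
have iiI : inj_on (lbit m) (OmegaU m.+1 C) -> I.
  move=> hL c c' a b cC c'C ha hb e.
  apply: (key _ _ _ _ _ CS cC c'C ha hb) => x.
  have sc := cs_prim _ _ CS cC; have sc' := cs_prim _ _ CS c'C.
  have back1 : forall a b, window c m a.+1 = window c' m b.+1 ->
      window c m a = window c' m b /\ sq c a = sq c' b.
    move=> a' b' e'.
    have e2 : window c m.+1 a' = window c' m.+1 b'.
      by apply: hL; rewrite ?OmegaU_in // /lbit !drop_window.
    split; first by rewrite -(take_window c) -(take_window c') e2.
    by rewrite -(head_window c m.+1 a') // -(head_window c' m.+1 b') // e2.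
  have backk : forall k a b, window c m (a + k) = window c' m (b + k) ->
      window c m a = window c' m b.
    elim=> [|k IH] a' b'; first by rewrite !addn0.
    by rewrite !addnS => /back1 [/IH].
  set t := x * (size c * size c').
  have xt : x <= t by rewrite leq_pmulr // muln_gt0 sc sc'.
  have : window c m ((a + x) + (t - x)) = window c' m ((b + x) + (t - x)).
    rewrite -!addnA subnKC // /t.
    rewrite [size c * _]mulnC mulnA window_addmul.
    by rewrite mulnAC window_addmul.
  move=> /backk e3.
  by rewrite -(head_window c m (a + x)) // -(head_window c' m (b + x)) // e3.
have iiiI : inj_on (hbit m) (OmegaU m.+1 C) -> I.
  move=> hH c c' a b cC c'C ha hb e.
  apply: (key _ _ _ _ _ CS cC c'C ha hb).
  have sc := cs_prim _ _ CS cC; have sc' := cs_prim _ _ CS c'C.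
  have fwd : forall x, window c m (a + x) = window c' m (b + x).
    elim=> [|x IH]; first by rewrite !addn0.
    have e2 : window c m.+1 (a + x) = window c' m.+1 (b + x).
      by apply: hH; rewrite ?OmegaU_in // /hbit !take_window.
    by rewrite !addnS -!drop_window e2.
  move=> x.
  by rewrite -(head_window c m (a + x)) // -(head_window c' m (b + x)) // fwd.
split; split.
- by move/iI; apply: Iii.
- by move/iiI/iI.
- by move/iiI; apply: Iiii.
- by move/iiiI; apply: Iii.
Qed.
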